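(* Let $\Gamma$ be a coloring and $\Omega$ a $k$-ordering of $T_{d,k}$, with root $\mathcal T$. (1) For every $g\in G_{d,k}$, the unique reduced word representing $g$ has length $m$ if and only if $\mathrm{dist}(g.\mathcal T,\mathcal T)=m$, where $\mathrm{dist}$ is the graph distance in the line graph of $T_{d,k}$. (2) The left action of $G_{d,k}$ on the $d$-cells of $T_{d,k}$ is simply transitive.
   Context: Fix $d,k\ge1$, $[\![d]\!]=\{0,\dots,d\}$. $G_{d,k}=\langle\alpha_0,\dots,\alpha_d\mid\alpha_i^k=e\rangle$ is the free product of $d+1$ cyclic groups of order $k$; a word $\alpha_{j_m}^{l_m}\cdots\alpha_{j_1}^{l_1}$ is reduced if all $l_r\in\{1,\dots,k-1\}$ and $j_r\ne j_{r+1}$; each element has a unique reduced word, of length $m$. The arboreal complex $T_{d,k}$: start from a single $d$-simplex $\mathcal T$, attach to each of its $(d-1)$-faces $k-1$ new $d$-simplices each using a new vertex, and inductively attach to each $(d-1)$-face created in the previous step $k-1$ new $d$-simplices each using a new vertex; $T_{d,k}$ is the union. Every $(d-1)$-cell lies in exactly $k$ $d$-cells. The line graph of $T_{d,k}$ has the $d$-cells as vertices, two being adjacent iff they share a $(d-1)$-cell. A coloring $\Gamma$ is a map from vertices to $[\![d]\!]$ injective on each $d$-cell, extended to cells by $\Gamma(\sigma)=\{\Gamma(v):v\in\sigma\}$. A $k$-ordering $\Omega$ assigns to each $(d-1)$-cell $\sigma$ a homomorphism $\Omega_\sigma:\mathbb Z/k\mathbb Z\to\mathrm{Sym}(\delta(\sigma))$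 with transitive image, $\delta(\sigma)$ being the set of $d$-cells containing $\sigma$. The left action of $G_{d,k}$ on $d$-cells: for a $d$-cell $\tau$, $i\in[\![d]\!]$, $l\in\mathbb Z$, put $\alpha_i^l.\tau=\Omega_\sigma(l).\tau$ where $\sigma$ is the unique $(d-1)$-face of $\tau$ of color $[\![d]\!]\setminus\{i\}$, and extend to words letter by letter (right-most letter first); this is a well-defined action. *)

(* Defs.v *)
From mathcomp Require Import all_boot.
Set Implicit Arguments. Unset Strict Implicit. Unset Printing Implicit Defensive.

(* A step (i, c) means: attach, to the (d-1)-face of the current simplex
   opposite to its vertex in position i, the c-th of the k-1 new simplices;
   the new simplex has the same vertices in the positions <> i and a new
   vertex in position i.  The faces "created" by a simplex are those
   containing its new vertex, i.e. opposite to a position j <> i; hence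
   consecutive steps use different positions.  A d-cell is the list of
   steps from the root (most recent step first). *)

Definition step d k := ('I_d.+1 * 'I_k.-1)%type.

Definition valid_addr d k (s : seq (step d k)) : bool :=
  sorted (fun a b : step d k => a.1 != b.1) s.

Definition cell d k := {s : seq (step d k) | valid_addr s}.

Definition root_cell d k : cell d k := exist _ [::] isT.

(* vertices: the d+1 root vertices, and for each non-root cell the new
   vertex it introduced (labelled by that cell's address) *)
Definition vtx d k := ('I_d.+1 + seq (step d k))%type.

Fixpoint addr_vtx d k (s : seq (step d k)) (p : 'I_d.+1) : vtx d k :=
  match s with
  | [::] => inl p
  | st :: rest => if st.1 == p then inr s else addr_vtx rest p
  end.

Definition cellv d k (t : cell d k) (p : 'I_d.+1) : vtx d k := addr_vtx (val t) p.

Definition in_cell d k (t : cell d k) (v : vtx d k) : bool :=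
  [exists p, cellv t p == v].

(* (d-1)-cells are represented by their vertex set (a predicate on vertices);
   they are the vertex sets of a d-cell with one vertex removed. *)
Definition is_dface d k (sigma : vtx d k -> bool) : Prop :=
  exists (t : cell d k) (p : 'I_d.+1),
    forall v, sigma v = in_cell t v && (v != cellv t p).

Definition delta d k (sigma : vtx d k -> bool) (t : cell d k) : Prop :=
  forall v, sigma v -> in_cell t v.

Definition adj d k (t t' : cell d k) : Prop :=
  t <> t' /\ exists sigma, is_dface sigma /\ delta sigma t /\ delta sigma t'.

Fixpoint walk d k (n : nat) (a b : cell d k) : Prop :=
  match n with
  | 0 => a = b
  | n.+1 => exists c, adj a c /\ walk n c b
  end.

Definition dist_is d k (a b : cell d k) (m : nat) : Prop :=
  walk m a b /\ forall n, n < m -> ~ walk n a b.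

Definition is_coloring d k (Gam : vtx d k -> 'I_d.+1) : Prop :=
  forall t : cell d k, injective (fun p => Gam (cellv t p)).

(* k-orderings: Om sigma l is Omega_sigma(l mod k); the conditions say that
   l |-> Om sigma l restricted to delta(sigma) is a homomorphism
   Z/kZ -> Sym(delta sigma) with transitive image. *)
Definition is_kordering d k
    (Om : (vtx d k -> bool) -> nat -> cell d k -> cell d k) : Prop :=
  forall sigma, is_dface sigma ->
    [/\ (forall t l, delta sigma t -> delta sigma (Om sigma l t)),
        (forall t, delta sigma t -> Om sigma 0 t = t),
        (forall t l1 l2, delta sigma t ->
            Om sigma (l1 + l2) t = Om sigma l1 (Om sigma l2 t)),
        (forall t, delta sigma t -> Om sigma k t = t) &
        (forall t t', delta sigma t -> delta sigma t' ->
            exists l, Om sigma l t = t')].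

(* the action of alpha_i^l: use the face of tau of color [d] \ {i} *)
Definition act1 d k (Gam : vtx d k -> 'I_d.+1)
    (Om : (vtx d k -> bool) -> nat -> cell d k -> cell d k)
    (i : 'I_d.+1) (l : nat) (t : cell d k) : cell d k :=
  Om (fun v => in_cell t v && (Gam v != i)) l t.

(* words alpha_{j_m}^{l_m} ... alpha_{j_1}^{l_1} as the list
   [:: (j_m,l_m); ...; (j_1,l_1)]; right-most letter acts first *)
Definition word d := seq ('I_d.+1 * nat).

Definition act d k Gam Om (w : word d) (t : cell d k) : cell d k :=
  foldr (fun x t => @act1 d k Gam Om x.1 x.2 t) t w.

(* reduced words = normal forms of the elements of G_{d,k} *)
Definition reduced d k (w : word d) : bool :=
  all (fun x => (0 < x.2) && (x.2 < k)) w &&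
  sorted (fun a b : 'I_d.+1 * nat => a.1 != b.1) w.

(* Main.v *)
Require Import Defs.
From mathcomp Require Import all_boot.
Set Implicit Arguments. Unset Strict Implicit. Unset Printing Implicit Defensive.


Definition sfx d k (u t : seq (step d k)) : bool :=
  (size u <= size t) && (drop (size t - size u) t == u).

Definition hpos d k (s : seq (step d k)) : 'I_d.+1 := head ord0 [seq x.1 | x <- s].

Definition SS d k (t b : seq (step d k)) (p : 'I_d.+1) : bool :=
  [&& sfx b t, size b < size t & hpos (drop (size t - size b).-1 t) == p].

Fixpoint Dt d k (t u : seq (step d k)) : nat :=
  match u with
  | [::] => size t
  | x :: u' => if sfx u t then size t - size u
               else if SS t u' x.1 then Dt t u' else (Dt t u').+1
  end.

Definition gate d k (t b : seq (step d k)) p :=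
  if SS t b p then drop (size t - size b).-1 t else b.

Definition inblk d k (b : seq (step d k)) p (v : seq (step d k)) :=
  (v == b) || (if v is x :: v' then (x.1 == p) && (v' == b) else false).

Definition base d k (p : 'I_d.+1) (u : seq (step d k)) :=
  if u is x :: u' then (if x.1 == p then u' else u) else u.

Definition NG d k (t u : seq (step d k)) p := u != gate t (base p u) p.

Lemma drop_cons_ex T (s : seq T) n : n < size s -> exists y, drop n s = y :: drop n.+1 s.
Proof.
elim: s n => [|a s IH] [|n] //= H; first by exists a; rewrite drop0.
exact: IH.
Qed.

Lemma sfx_nil d k (t : seq (step d k)) : sfx [::] t.
Proof. by rewrite /sfx subn0 drop_size eqxx. Qed.

Lemma sfx_cons d k (t u : seq (step d k)) x :
  sfx (x :: u) t = (size u < size t) && (drop (size t - size u).-1 t == x :: u).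
Proof. by rewrite /sfx /= subnS. Qed.

Lemma dropS T (t : seq T) n : drop n.+1 t = behead (drop n t).
Proof. by elim: t n => [|a t IH] [|n] //=; rewrite drop0. Qed.

Lemma drop_pred T (t : seq T) j : 0 < j -> drop j t = behead (drop j.-1 t).
Proof. by move=> Hj; rewrite -dropS prednK. Qed.

Lemma sfx_behead d k (t u : seq (step d k)) x : sfx (x :: u) t -> sfx u t.
Proof.
rewrite sfx_cons /sfx => /andP [H /eqP E].
have H' : 0 < size t - size u by rewrite subn_gt0.
by rewrite ltnW //= (drop_pred _ H') E.
Qed.

Lemma sfx_Dt d k (t u : seq (step d k)) : sfx u t -> Dt t u = size t - size u.
Proof. by case: u => [|x u] /= H; [rewrite subn0 | rewrite H]. Qed.

Lemma sfx_refl d k (t : seq (step d k)) : sfx t t.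
Proof. by rewrite /sfx leqnn subnn drop0 eqxx. Qed.

Lemma Dt_self d k (t : seq (step d k)) : Dt t t = 0.
Proof. by rewrite sfx_Dt ?subnn ?sfx_refl. Qed.

Lemma SS_drop d k (t b : seq (step d k)) p : SS t b p ->
  exists y, [/\ drop (size t - size b).-1 t = y :: b, y.1 = p, sfx b t &
                 0 < size t - size b].
Proof.
move=> /and3P [Hs Hlt /eqP Hp].
have Hj : 0 < size t - size b by rewrite subn_gt0.
have Hj' : (size t - size b).-1 < size t.
  by rewrite (leq_trans _ (leq_subr (size b) (size t))) // prednK.
have [y Ey] := drop_cons_ex Hj'.
rewrite prednK // in Ey.
move: (Hs) => /andP [_ /eqP Eb]; rewrite Eb in Ey.
by exists y; split => //; rewrite -Hp Ey.
Qed.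

Lemma BL d k (t b v : seq (step d k)) p : inblk b p v -> v != gate t b p ->
  Dt t v = (Dt t (gate t b p)).+1.
Proof.
rewrite /gate; case HS: (SS t b p).
- have [y [Ey Hy Hs Hj]] := SS_drop HS.
  have Hyb : sfx (y :: b) t.
    by rewrite sfx_cons Ey eqxx andbT -subn_gt0.
  rewrite Ey (sfx_Dt Hyb) /= subnS.
  case/orP => [/eqP -> _ | ]; first by rewrite sfx_Dt // prednK.
  case: v => [|x v] //= /andP [/eqP Hx /eqP ->] Hne.
  rewrite sfx_cons Ey eq_sym (negbTE Hne) andbF Hx HS sfx_Dt // prednK //.
- case/orP => [/eqP -> | ]; first by rewrite eqxx.
  case: v => [|x v] //= /andP [/eqP Hx /eqP ->] _.
  case Hsx: (sfx (x :: b) t).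
    move: (Hsx); rewrite sfx_cons => /andP [Hlt /eqP E].
    move: HS; rewrite /SS (sfx_behead Hsx) Hlt E /hpos /= Hx eqxx //.
  by rewrite Hx HS.
Qed.

Lemma inblk_base d k (u : seq (step d k)) p : inblk (base p u) p u.
Proof.
case: u => [|x u] /=; rewrite /inblk ?eqxx //.
by case: ifP => Hx; rewrite ?eqxx ?Hx ?orbT.
Qed.

Lemma NG_child d k (t u : seq (step d k)) x : NG t (x :: u) x.1 -> ~~ sfx (x :: u) t.
Proof.
rewrite /NG /= eqxx /gate; apply: contraL => Hsx.
move: (Hsx); rewrite sfx_cons => /andP [Hlt /eqP E].
by rewrite /SS (sfx_behead Hsx) Hlt E /hpos /= eqxx /= eqxx.
Qed.

Lemma NG_base d k (t u : seq (step d k)) p : base p u = u -> NG t u p -> SS t u p.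
Proof. by rewrite /NG => ->; rewrite /gate; case: (SS t u p) => //; rewrite eqxx. Qed.

Lemma SS_sfx d k (t u : seq (step d k)) p : SS t u p -> sfx u t.
Proof. by case/and3P. Qed.

Lemma SS_uniq d k (t u : seq (step d k)) p q : SS t u p -> SS t u q -> p = q.
Proof. by case/and3P => _ _ /eqP <-; case/and3P => _ _ /eqP. Qed.

Lemma NG_uniq d k (t u : seq (step d k)) p q : NG t u p -> NG t u q -> p = q.
Proof.
case: u => [|x u].
  by move=> /NG_base -/(_ erefl) Hp /NG_base -/(_ erefl) Hq; apply: SS_uniq Hp Hq.
case Hp: (x.1 == p); case Hq: (x.1 == q).
- by move: Hp Hq => /eqP <- /eqP <-.
- move: Hp => /eqP <- /NG_child Hn /NG_base; rewrite /= Hq => /(_ erefl) /SS_sfx.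
  by rewrite (negbTE Hn).
- move=> /NG_base; rewrite /= Hp => /(_ erefl) /SS_sfx Hs.
  by move: Hq => /eqP <- /NG_child; rewrite Hs.
- move=> /NG_base; rewrite /= Hp => /(_ erefl) H1.
  move=> /NG_base; rewrite /= Hq => /(_ erefl) H2.
  exact: SS_uniq H1 H2.
Qed.

Definition validl d k (s : seq (step d k)) := sorted (fun a b : step d k => a.1 != b.1) s.

Lemma NG_exists d k (t u : seq (step d k)) : validl t -> u != t -> exists p, NG t u p.
Proof.
move=> Vt Hne; case Hs: (sfx u t).
- move: (Hs) => /andP [Hle /eqP E].
  have Hj : 0 < size t - size u.
    rewrite lt0n; apply/negP => /eqP H0; move: E; rewrite H0 drop0 => E.
    by rewrite E eqxx in Hne.
  have Hj' : (size t - size u).-1 < size t.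
    by rewrite (leq_trans _ (leq_subr (size u) (size t))) // prednK.
  have [y Ey] := drop_cons_ex Hj'; rewrite prednK // E in Ey.
  exists y.1.
  have Hlt : size u < size t by rewrite -subn_gt0.
  have HS : SS t u y.1 by rewrite /SS Hs Hlt Ey /hpos /= eqxx.
  have Hb : base y.1 u = u.
    case: u {Hs Hle E Hne Hj Hj' HS Hlt} Ey => [|x u] //= Ey.
    have := drop_sorted (size t - size (x :: u)).-1 Vt; rewrite Ey /= => /andP [Hyx _].
    by rewrite eq_sym (negbTE Hyx).
  rewrite /NG Hb /gate HS Ey; apply/eqP => /(f_equal size) /=.
  by move=> H; move: (n_Sn (size u)); rewrite -H.
- case: u Hs Hne => [|x u]; first by rewrite sfx_nil.
  move=> Hs _; exists x.1; rewrite /NG /= eqxx /gate.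
  case HS: (SS t u x.1); last first.
    by apply/eqP => /(f_equal size) /= H; move: (n_Sn (size u)); rewrite H.
  apply/eqP => E; move: Hs; rewrite sfx_cons -E eqxx andbT.
  by case/and3P: HS => _ ->.
Qed.

Lemma Dt_pos d k (t u : seq (step d k)) : validl t -> u != t -> 0 < Dt t u.
Proof.
move=> Vt Hne; have [p Hp] := NG_exists Vt Hne.
by rewrite (BL (inblk_base u p) Hp).
Qed.

Definition hb d k (p : 'I_d.+1) (b : seq (step d k)) :=
  if b is y :: _ then y.1 != p else true.

Lemma base_ok d k (u : seq (step d k)) p : validl u -> hb p (base p u) && validl (base p u).
Proof.
case: u => [|x u] //= Vu.
case: ifP => Hx.
- case: u Vu => [|y u] //= /andP [Hxy Vu]; rewrite Vu andbT.
  by move: Hx Hxy => /eqP <-; rewrite eq_sym.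
- by rewrite /= Hx Vu.
Qed.

Lemma base_of_inblk d k (b v : seq (step d k)) p : hb p b -> inblk b p v -> base p v = b.
Proof.
move=> Hb /orP [/eqP -> | ].
  by case: b Hb => [|y b] //= /negbTE ->.
by case: v => [|x v] //= /andP [/eqP -> /eqP ->]; rewrite eqxx.
Qed.

Lemma inblk_valid d k (b v : seq (step d k)) p : validl b -> hb p b -> inblk b p v -> validl v.
Proof.
move=> Vb Hb /orP [/eqP -> // | ].
case: v => [|x v] //= /andP [/eqP Hx /eqP Ev]; subst v.
case: b Vb Hb => [|y b] //= Vb Hb; rewrite Vb andbT Hx; by rewrite eq_sym.
Qed.

Lemma gate_inblk d k (t b : seq (step d k)) p : inblk b p (gate t b p).
Proof.
rewrite /gate; case HS: (SS t b p); last by rewrite /inblk eqxx.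
have [y [Ey Hy _ _]] := SS_drop HS.
by rewrite Ey /inblk /= Hy !eqxx orbT.
Qed.

Lemma Dt_nil d k (u : seq (step d k)) : Dt [::] u = size u.
Proof.
elim: u => [|x u IH] //=.
by rewrite /sfx /SS /= !andbF IH.
Qed.

Definition Bl d k (b : seq (step d k)) (p : 'I_d.+1) : seq (seq (step d k)) :=
  b :: [seq (p, c) :: b | c <- enum 'I_k.-1].

Lemma inblk_Bl d k (b v : seq (step d k)) p : inblk b p v = (v \in Bl b p).
Proof.
rewrite /inblk /Bl in_cons; congr (_ || _).
case: v => [|[x1 x2] v] /=.
  by apply/esym/negP => /mapP [c _].
apply/idP/mapP.
  by case/andP => /eqP -> /eqP ->; exists x2; rewrite ?mem_enum.
by case=> c _ [-> _ ->]; rewrite !eqxx.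
Qed.

Lemma Bl_uniq d k (b : seq (step d k)) p : uniq (Bl b p).
Proof.
rewrite /Bl /= map_inj_uniq ?enum_uniq ?andbT; last by move=> c1 c2 [].
by apply/negP => /mapP [c _] /(f_equal size) /= /n_Sn.
Qed.

Lemma Bl_size d k (b : seq (step d k)) p : 0 < k -> size (Bl b p) = k.
Proof. by move=> hk; rewrite /= size_map size_enum_ord prednK. Qed.

Lemma addr_vtx_cons d k (s : seq (step d k)) x q : x.1 != q -> addr_vtx (x :: s) q = addr_vtx s q.
Proof. by move=> H /=; rewrite (negbTE H). Qed.

Lemma addr_vtx_blk d k (b v : seq (step d k)) p q : inblk b p v -> q != p ->
  addr_vtx v q = addr_vtx b q.
Proof.
move=> + Hq; move=> /orP [/eqP -> // | ].
case: v => [|x v] //= /andP [/eqP Hx /eqP ->]; rewrite Hx.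
by rewrite eq_sym (negbTE Hq).
Qed.

Lemma addr_vtx_size d k (s r : seq (step d k)) q : addr_vtx s q = inr r -> size r <= size s.
Proof.
elim: s => [|x s IH] //=; case: ifP => _.
  by case=> <-.
by move=> /IH /leq_trans; apply.
Qed.

Lemma uniq_map_inj (T1 T2 : eqType) (f : T1 -> T2) s x y : uniq (map f s) ->
  x \in s -> y \in s -> f x = f y -> x = y.
Proof.
elim: s => [|a s IH] //= /andP [Ha Hu].
rewrite !in_cons => /orP [/eqP -> | Hx] /orP [/eqP -> | Hy] // E.
- by move: Ha; rewrite E (map_f f Hy).
- by move: Ha; rewrite -E (map_f f Hx).
- exact: IH.
Qed.

Definition pi d k (Gam : vtx d k -> 'I_d.+1) (q : 'I_d.+1) := Gam (inl q).

Lemma pi_inj d k (Gam : vtx d k -> 'I_d.+1) : is_coloring Gam -> injective (pi Gam).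
Proof. move=> HG; exact: (HG (root_cell d k)). Qed.

Lemma color d k (Gam : vtx d k -> 'I_d.+1) : is_coloring Gam ->
  forall s, validl s -> forall q, Gam (addr_vtx s q) = pi Gam q.
Proof.
move=> HG; elim => [|x s IH] //= Vs q.
have Vs' : validl s by move: Vs; rewrite /validl /=; exact: path_sorted.
case: eqP => Hxq; last exact: IH.
subst q.
have := inj_card_onto (pi_inj HG) (leqnn _) (Gam (inr (x :: s))).
case/codomP => r Er.
case: (eqVneq r x.1) => [E | Hr]; first by rewrite Er E.
pose C : cell d k := exist _ (x :: s) Vs.
have := HG C r x.1; rewrite /cellv /= eqxx eq_sym (negbTE Hr) IH // -Er => /(_ erefl) E.
by rewrite E eqxx in Hr.
Qed.

Definition sig d k (Gam : vtx d k -> 'I_d.+1) (U : cell d k) (i : 'I_d.+1) :=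
  fun v => in_cell U v && (Gam v != i).

Lemma dface_sig d k (Gam : vtx d k -> 'I_d.+1) (U : cell d k) p : is_coloring Gam ->
  is_dface (sig Gam U (pi Gam p)).
Proof.
move=> HG; exists U, p => v; rewrite /sig.
case Hv: (in_cell U v) => //=.
case/existsP: Hv => r /eqP <-.
have cinj : injective (cellv U) := fun a b E => HG U a b (congr1 Gam E).
rewrite (inj_eq cinj) /cellv (color HG (valP U)).
by rewrite (inj_eq (pi_inj HG)).
Qed.

Lemma delta_blk d k (Gam : vtx d k -> 'I_d.+1) (U V : cell d k) p : is_coloring Gam ->
  inblk (base p (val U)) p (val V) -> delta (sig Gam U (pi Gam p)) V.
Proof.
move=> HG Hb v; rewrite /sig => /andP [/existsP [r /eqP Er] Hg]; subst v.
have Hr : r != p.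
  by apply: contraNneq Hg => ->; rewrite /cellv (color HG (valP U)).
apply/existsP; exists r; rewrite /cellv.
by rewrite (addr_vtx_blk Hb Hr) (addr_vtx_blk (inblk_base (val U) p) Hr).
Qed.

Lemma delta_self d k (Gam : vtx d k -> 'I_d.+1) (U : cell d k) i : delta (sig Gam U i) U.
Proof. by move=> v; rewrite /sig => /andP []. Qed.

Lemma Om_mod d k (Om : (vtx d k -> bool) -> nat -> cell d k -> cell d k) sigma U :
  is_kordering Om -> is_dface sigma -> delta sigma U ->
  forall l, Om sigma l U = Om sigma (l %% k) U.
Proof.
move=> HO Hs HU l.
have [Hcl H0 Hadd Hk Htr] := HO sigma Hs.
have Hn : forall n, Om sigma (n * k) U = U.
  elim => [|n IH]; first by rewrite mul0n H0.
  by rewrite mulSn Hadd // IH Hk.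
by rewrite {1}(divn_eq l k) addnC Hadd // Hn.
Qed.

Lemma AL d k (Gam : vtx d k -> 'I_d.+1) Om (hk : 0 < k) (HG : is_coloring Gam)
  (HO : is_kordering Om) (U : cell d k) (p : 'I_d.+1) :
  let A l := act1 Gam Om (pi Gam p) l U in
  [/\ forall l, inblk (base p (val U)) p (val (A l)),
      A 0 = U,
      forall l1 l2, l1 < k -> l2 < k -> A l1 = A l2 -> l1 = l2,
      forall V, inblk (base p (val U)) p (val V) -> exists2 l, l < k & A l = V &
      forall l, A l <> U -> adj U (A l)].
Proof.
move=> A.
set sigma := sig Gam U (pi Gam p).
have Hs : is_dface sigma := dface_sig U p HG.
have HU : delta sigma U := @delta_self d k Gam U _.
have [Hcl H0 Hadd Hk Htr] := HO sigma Hs.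
have Hmod := Om_mod HO Hs HU.
set b := base p (val U).
have /andP [hbb Vb] := base_ok p (valP U).
pose f (l : 'I_k) := val (Om sigma l U).
have Hsub : {subset Bl b p <= map f (enum 'I_k)}.
  move=> v; rewrite -inblk_Bl => Hv.
  pose V : cell d k := exist _ v (inblk_valid Vb hbb Hv).
  have [l0 El0] := Htr U V HU (@delta_blk d k Gam U V p HG Hv).
  apply/mapP; exists (Ordinal (ltn_pmod l0 hk)); first by rewrite mem_enum.
  by rewrite /f /= -Hmod El0.
have Hsz : size (map f (enum 'I_k)) <= size (Bl b p) by rewrite size_map size_enum_ord Bl_size.
have [_ Heq] := uniq_min_size (Bl_uniq b p) Hsub Hsz.
have Hu := leq_size_uniq (Bl_uniq b p) Hsub Hsz.
have Hin : forall l, inblk b p (val (A l)).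
  move=> l; rewrite inblk_Bl Heq /A /act1 -/sigma Hmod.
  by apply/mapP; exists (Ordinal (ltn_pmod l hk)); rewrite ?mem_enum.
split.
- exact: Hin.
- exact: H0 U HU.
- move=> l1 l2 H1 H2 E.
  have := @uniq_map_inj _ _ f _ (Ordinal H1) (Ordinal H2) Hu.
  by rewrite !mem_enum => /(_ isT isT); rewrite /f /= -[Om _ _ _]/(A l1) E => /(_ erefl) [].
- move=> V HV; move: (HV); rewrite inblk_Bl Heq => /mapP [l _ El].
  by exists l => //; apply: val_inj; rewrite El.
- move=> l Hne; split; first by move=> E; apply: Hne; rewrite E.
  by exists sigma; split => //; split => //; apply: Hcl.
Qed.

Lemma red_cons d k (x : 'I_d.+1 * nat) (w : word d) :
  reduced k (x :: w) =
  [&& 0 < x.2, x.2 < k, reduced k w & (if w is y :: _ then x.1 != y.1 else true)].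
Proof.
rewrite /reduced /=.
case: w => [|y w] /=; first by rewrite !andbT.
case: (0 < x.2); case: (x.2 < k); case: (x.1 != y.1);
  case: (0 < y.2 < k); case: (all _ w); case: (path _ y w) => //.
Qed.

Lemma act_cons d k Gam Om (x : 'I_d.+1 * nat) (w : word d) (T : cell d k) :
  act Gam Om (x :: w) T = act1 Gam Om x.1 x.2 (act Gam Om w T).
Proof. by []. Qed.

Lemma INV d k (Gam : vtx d k -> 'I_d.+1) Om (hk : 0 < k) (HG : is_coloring Gam)
  (HO : is_kordering Om) (T : cell d k) (w : word d) : reduced k w ->
  Dt (val T) (val (act Gam Om w T)) = size w /\
  (forall x w', w = x :: w' -> NG (val T) (val (act Gam Om w T)) (invF (pi_inj HG) x.1)).
Proof.
elim: w => [|x w IH]; first by move=> _; split => //; rewrite /= Dt_self.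
rewrite red_cons => /and4P [Hx0 Hxk Hr Hxy].
have [IH1 IH2] := IH Hr.
rewrite act_cons.
set U := act Gam Om w T.
set p := invF (pi_inj HG) x.1.
have Ex : x.1 = pi Gam p by rewrite /p f_invF.
rewrite Ex.
have [Hin HA0 Hinj _ _] := AL hk HG HO U p.
set b := base p (val U).
have /andP [hbb Vb] := base_ok p (valP U).
have Hne : val (act1 Gam Om (pi Gam p) x.2 U) != val U.
  apply/negP => /eqP /val_inj E.
  have := Hinj x.2 0 Hxk hk; rewrite HA0 => /(_ E) E0.
  by rewrite E0 in Hx0.
have HnNG : ~~ NG (val T) (val U) p.
  apply/negP => HN.
  case Ew: w Hxy => [|y w'] Hxy.
  - have := BL (inblk_base (val U) p) HN.
    by rewrite /U Ew /= Dt_self.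
  - have := IH2 y w' Ew; rewrite -/U => HN'.
    have E := NG_uniq HN' HN.
    move: Hxy; rewrite Ex -E f_invF eqxx //.
have HgU : gate (val T) b p = val U by move: HnNG; rewrite /NG negbK eq_sym => /eqP.
split.
- by rewrite (BL (Hin x.2) _) HgU ?IH1 // -HgU.
- move=> x0 w0 [<- _]; rewrite -/p /NG (base_of_inblk hbb (Hin x.2)) HgU //.
Qed.

Lemma adj_sym d k (a b : cell d k) : adj a b -> adj b a.
Proof. by case=> Hne [s [Hs [Ha Hb]]]; split; [move=> E; apply: Hne | exists s]. Qed.

Lemma shared_vtx d k (Gam : vtx d k -> 'I_d.+1) (HG : is_coloring Gam) (a t : cell d k) q :
  in_cell a (cellv t q) -> cellv a q = cellv t q.
Proof.
case/existsP => r /eqP Er.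
have : pi Gam r = pi Gam q.
  by rewrite -(color HG (valP a)) -(color HG (valP t)); rewrite /cellv in Er; rewrite Er.
by move/(pi_inj HG) => Erq; subst r.
Qed.

Lemma adj_size d k (Gam : vtx d k -> 'I_d.+1) (HG : is_coloring Gam) (a b : cell d k) :
  adj a b -> size (val a) <= (size (val b)).+1.
Proof.
case=> _ [s [[t [p Hs]] [Ha Hb]]].
have key : forall q, q != p -> cellv a q = cellv b q.
  move=> q Hq.
  have cinj : injective (cellv t) := fun x y E => HG t x y (congr1 Gam E).
  have Hsq : s (cellv t q) by rewrite Hs (inj_eq cinj) Hq andbT; apply/existsP; exists q.
  by rewrite (shared_vtx HG (Ha _ Hsq)) (shared_vtx HG (Hb _ Hsq)).
rewrite leqNgt; apply/negP => Hlt.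
case Ea: (val a) Hlt key => [|x [|y a']] //= Hlt key.
have Va := valP a; rewrite Ea in Va.
have Hxy : x.1 != y.1 by move: Va; rewrite /valid_addr /= => /andP [].
have [q [Hq Hv]] : exists q, q != p /\ exists r, addr_vtx (val a) q = inr r /\ (size a').+1 <= size r.
  case: (eqVneq x.1 p) => Hxp.
  - exists y.1; split; first by rewrite -Hxp eq_sym.
    by exists (y :: a'); rewrite Ea /= (negbTE Hxy) eqxx.
  - exists x.1; split => //.
    by exists (x :: y :: a'); rewrite Ea /= eqxx /= leqnSn.
case: Hv => r [Er Hr].
have := key q Hq; rewrite /cellv Er => /esym /addr_vtx_size Hs'.
have H1 := leq_trans Hr Hs'; rewrite !ltnS in Hlt.
by move: (leq_trans H1 Hlt); rewrite ltnn.
Qed.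

Lemma walk_size d k (Gam : vtx d k -> 'I_d.+1) (HG : is_coloring Gam) n (a : cell d k) :
  walk n a (root_cell d k) -> size (val a) <= n.
Proof.
elim: n a => [|n IH] a /=; first by move=> ->.
case=> c [Hac Hw]; apply: (leq_trans (adj_size HG Hac)); rewrite ltnS; exact: IH.
Qed.

Lemma red_nil d k : reduced k ([::] : word d).
Proof. by []. Qed.

Lemma walk_act d k (Gam : vtx d k -> 'I_d.+1) Om (hk : 0 < k) (HG : is_coloring Gam)
  (HO : is_kordering Om) (w : word d) : reduced k w ->
  walk (size w) (act Gam Om w (root_cell d k)) (root_cell d k).
Proof.
elim: w => [|x w IH] //= Hr.
have Hr' := Hr; rewrite red_cons in Hr'; case/and4P: Hr' => _ _ Hw _.
exists (act Gam Om w (root_cell d k)); split; last exact: IH.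
apply: adj_sym.
have [Hs1 _] := INV hk HG HO (root_cell d k) Hr.
have [Hs2 _] := INV hk HG HO (root_cell d k) Hw.
rewrite !Dt_nil in Hs1 Hs2.
set p := invF (pi_inj HG) x.1.
have Ex : x.1 = pi Gam p by rewrite /p f_invF.
have [_ _ _ _ Hadj] := AL hk HG HO (act Gam Om w (root_cell d k)) p.
rewrite -Ex in Hadj; apply: Hadj => E.
by move: Hs1; rewrite act_cons E Hs2 => /n_Sn.
Qed.

Lemma EX d k (Gam : vtx d k -> 'I_d.+1) Om (hk : 0 < k) (HG : is_coloring Gam)
  (HO : is_kordering Om) (T : cell d k) n : forall V : cell d k,
  Dt (val T) (val V) <= n -> exists w : word d, reduced k w /\ act Gam Om w T = V.
Proof.
elim: n => [|n IH] V Hn.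
- exists [::]; split => //=; apply: val_inj; apply/eqP; apply: contraLR Hn => Hne.
  by rewrite -ltnNge (Dt_pos (valP T) (_ : val V != val T)) // eq_sym.
- case: (eqVneq (val V) (val T)) => [E | Hne].
    by exists [::]; split => //=; apply: val_inj.
  have [p HN] := NG_exists (valP T) Hne.
  set b := base p (val V).
  have /andP [hbb Vb] := base_ok p (valP V).
  set g := gate (val T) b p.
  have Hg := @gate_inblk d k (val T) b p.
  pose G : cell d k := exist _ g (inblk_valid Vb hbb Hg).
  have HD := BL (inblk_base (val V) p) HN.
  have [w' [Hw' EG]] : exists w, reduced k w /\ act Gam Om w T = G.
    by apply: IH; rewrite /= -ltnS -HD.
  have [_ HA0 _ Hsurj _] := AL hk HG HO G p.
  have HbG : base p (val G) = b := base_of_inblk hbb Hg.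
  have HV : inblk (base p (val G)) p (val V) by rewrite HbG; exact: inblk_base.
  have [l Hlk El] := Hsurj V HV.
  exists ((pi Gam p, l) :: w'); split; last by rewrite act_cons EG.
  rewrite red_cons Hw' Hlk /=; apply/andP; split.
    rewrite lt0n; apply/negP => /eqP El0; move: HN; rewrite /NG -/b -/g.
    by rewrite -El El0 HA0 /= eqxx.
  case: w' Hw' EG => [|y w'] // Hw' EG.
  have [_ Hng] := INV hk HG HO T Hw'.
  have := Hng y w' erefl; rewrite EG.
  apply: contraTneq => Ey.
  by rewrite -Ey invF_f /NG HbG -/g /= eqxx.
Qed.

Lemma gate_prev d k (Gam : vtx d k -> 'I_d.+1) Om (hk : 0 < k) (HG : is_coloring Gam)
  (HO : is_kordering Om) (t : seq (step d k)) (U : cell d k) p l :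
  Dt t (val (act1 Gam Om (pi Gam p) l U)) = (Dt t (val U)).+1 ->
  NG t (val (act1 Gam Om (pi Gam p) l U)) p ->
  val U = gate t (base p (val U)) p.
Proof.
move=> DA HN.
have [Hin _ _ _ _] := AL hk HG HO U p.
have /andP [hb _] := base_ok p (valP U).
rewrite /NG (base_of_inblk hb (Hin l)) in HN.
have DA' := BL (Hin l) HN.
apply/eqP; apply/negPn/negP => Hn.
have := BL (inblk_base (val U) p) Hn.
by rewrite -DA' DA => /n_Sn.
Qed.

Lemma UN d k (Gam : vtx d k -> 'I_d.+1) Om (hk : 0 < k) (HG : is_coloring Gam)
  (HO : is_kordering Om) (T : cell d k) (w1 : word d) : forall w2 : word d,
  reduced k w1 -> reduced k w2 -> act Gam Om w1 T = act Gam Om w2 T -> w1 = w2.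
Proof.
elim: w1 => [|x1 w1 IH] [|x2 w2] // Hr1 Hr2 E.
- have [H _] := INV hk HG HO T Hr2; by rewrite -E /= Dt_self in H.
- have [H _] := INV hk HG HO T Hr1; by rewrite E /= Dt_self in H.
have [D1 N1] := INV hk HG HO T Hr1.
have [D2 N2] := INV hk HG HO T Hr2.
have NG1 := N1 _ _ erefl.
have NG2 := N2 _ _ erefl.
rewrite -E in NG2 D2.
have Ep := NG_uniq NG1 NG2.
set p := invF (pi_inj HG) x1.1.
have E1 : x1.1 = pi Gam p by rewrite /p f_invF.
have E2 : x2.1 = pi Gam p by rewrite /p Ep f_invF.
move: Hr1 Hr2; rewrite !red_cons => /and4P [_ H1k Hw1 _] /and4P [_ H2k Hw2 _].
have [D1' _] := INV hk HG HO T Hw1.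
have [D2' _] := INV hk HG HO T Hw2.
have A1 : act1 Gam Om (pi Gam p) x1.2 (act Gam Om w1 T) = act Gam Om (x1 :: w1) T
  by rewrite act_cons E1.
have A2 : act1 Gam Om (pi Gam p) x2.2 (act Gam Om w2 T) = act Gam Om (x1 :: w1) T
  by rewrite E act_cons E2.
have G1 : val (act Gam Om w1 T) = gate (val T) (base p (val (act Gam Om w1 T))) p.
  apply: (gate_prev hk HG HO (l := x1.2)); rewrite A1 //.
  by rewrite D1 D1'.
have G2 : val (act Gam Om w2 T) = gate (val T) (base p (val (act Gam Om w2 T))) p.
  apply: (gate_prev hk HG HO (l := x2.2)); rewrite A2 //.
  by rewrite D2 D2'.
have [Hin1 _ Hinj1 _ _] := AL hk HG HO (act Gam Om w1 T) p.
have [Hin2 _ _ _ _] := AL hk HG HO (act Gam Om w2 T) p.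
have /andP [hb1 _] := base_ok p (valP (act Gam Om w1 T)).
have /andP [hb2 _] := base_ok p (valP (act Gam Om w2 T)).
have B1 := base_of_inblk hb1 (Hin1 x1.2).
have B2 := base_of_inblk hb2 (Hin2 x2.2).
have EU : act Gam Om w1 T = act Gam Om w2 T.
  apply: val_inj; rewrite G1 G2 -B1 -B2 A1 A2 //.
have Ew := IH w2 Hw1 Hw2 EU; subst w2.
have := A1; rewrite -A2 => /(Hinj1 _ _ H1k H2k) El.
by rewrite (surjective_pairing x1) (surjective_pairing x2) E1 E2 El.
Qed.

Theorem lemma5 (d k : nat) (hd : 1 <= d) (hk : 1 <= k)
  (Gam : vtx d k -> 'I_d.+1)
  (Om : (vtx d k -> bool) -> nat -> cell d k -> cell d k)
  (HG : is_coloring Gam) (HO : is_kordering Om) :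
  (forall w : word d, reduced k w ->
     forall m, size w = m <-> dist_is (act Gam Om w (@root_cell d k)) (@root_cell d k) m)
  /\
  (forall t t' : cell d k,
     exists! w : word d, reduced k w /\ act Gam Om w t = t').
Proof.
split.
- move=> w Hw.
  have [Hs _] := INV hk HG HO (root_cell d k) Hw.
  rewrite Dt_nil in Hs.
  have Hd : dist_is (act Gam Om w (root_cell d k)) (root_cell d k) (size w).
    split; first exact: walk_act.
    move=> n Hn Hwk; have := walk_size HG Hwk; rewrite Hs leqNgt Hn //.
  move=> m; split; first by move=> <-.
  case=> Hwm Hmin; case: (ltngtP m (size w)) => // Hlt.
  + by have := walk_size HG Hwm; rewrite Hs leqNgt Hlt.
  + by case: Hd => Hw' _; case: (Hmin _ Hlt Hw').
- move=> t t'.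
  have [w [Hw E]] := @EX d k Gam Om hk HG HO t _ t' (leqnn (Dt (val t) (val t'))).
  exists w; split => // w' [Hw' E'].
  exact: (UN hk HG HO Hw Hw' (etrans E (esym E'))).
Qed.
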